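(* Let $L,M,N$ be integers with $\min\{L,M,N\}\ge 2$ and let ${\cal R}=[0,L]\times[0,M]\times[0,N]$. Up to a permutation of the four colors, there is exactly one slab-type coloring of ${\cal R}$.
   Context: Unit cubes are sets $[x,x+1]\times[y,y+1]\times[z,z+1]$ with $(x,y,z)\in\mathbb{Z}^3$. A slab is a $2\times2\times1$ parallelepiped (in any of the three orientations) which is a union of four unit cubes. A slab-type coloring of a region ${\cal R}$ (a finite union of unit cubes) is an assignment of one of four colors to each unit cube of ${\cal R}$ such that every slab contained in ${\cal R}$ covers exactly one cube of each color. *)

(* Defs.v *)
From mathcomp Require Import all_boot all_fingroup.
Set Implicit Arguments. Unset Strict Implicit. Unset Printing Implicit Defensive.

(* A unit cube [x,x+1]x[y,y+1]x[z,z+1] is identified with its corner (x,y,z).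
   Since the region lies in the nonnegative octant, nat coordinates suffice. *)
Definition cube := (nat * nat * nat)%type.

Definition in_box (L M N : nat) (p : cube) : bool :=
  let: (x, y, z) := p in [&& x < L, y < M & z < N].

(* The four unit cubes of a slab with lowest corner (x,y,z) and orientation o:
   o = 0 : 2x2x1 (spanning x and y), o = 1 : 2x1x2 (x and z), o = 2 : 1x2x2 (y and z). *)
Definition slab_cubes (o : 'I_3) (x y z : nat) : seq cube :=
  match val o with
  | 0 => [:: (x, y, z); (x.+1, y, z); (x, y.+1, z); (x.+1, y.+1, z)]
  | 1 => [:: (x, y, z); (x.+1, y, z); (x, y, z.+1); (x.+1, y, z.+1)]
  | _ => [:: (x, y, z); (x, y.+1, z); (x, y, z.+1); (x, y.+1, z.+1)]
  end.

(* A coloring of the region with four colors; values outside the region are irrelevant. *)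
Definition slab_type_coloring (L M N : nat) (c : cube -> 'I_4) : Prop :=
  forall (o : 'I_3) (x y z : nat),
    all (in_box L M N) (slab_cubes o x y z) ->
    forall k : 'I_4, count (fun p => c p == k) (slab_cubes o x y z) = 1.

(* Main.v *)
Require Import Defs.
From mathcomp Require Import all_boot all_fingroup zify.
Set Implicit Arguments. Unset Strict Implicit.

Lemma in4 (a b d e w : 'I_4) : uniq [:: a; b; d; e] -> w \in [:: a; b; d; e].
Proof.
move=> U; apply/negPn/negP => Hw.
have U5 : uniq (w :: [:: a; b; d; e]) by rewrite /= Hw.
move/card_uniqP: U5 => /= H5.
have := max_card (mem (w :: [:: a; b; d; e])).
by rewrite H5 card_ord.
Qed.

Ltac clr := match goal with H : is_true (uniq _) |- _ => move: H end.

Lemma cube8 (a000 a100 a010 a110 a001 a101 a011 a111 : 'I_4) :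
  uniq [:: a000; a100; a010; a110] ->
  uniq [:: a001; a101; a011; a111] ->
  uniq [:: a000; a100; a001; a101] ->
  uniq [:: a010; a110; a011; a111] ->
  uniq [:: a000; a010; a001; a011] ->
  uniq [:: a100; a110; a101; a111] ->
  [/\ a000 = a111, a100 = a011, a010 = a101 & a001 = a110].
Proof.
move=> U1 U2 U3 U4 U5 U6; split.
- move: (@in4 _ _ _ _ a000 U2); rewrite !inE => /or4P [] /eqP E //; subst;
  by move: U3 U5; rewrite /= !inE !eqxx /= ?orbT ?orTb ?andbF.
- move: (@in4 _ _ _ _ a100 U2); rewrite !inE => /or4P [] /eqP E //; subst;
  by move: U3 U6; rewrite /= !inE !eqxx /= ?orbT ?orTb ?andbF.
- move: (@in4 _ _ _ _ a010 U2); rewrite !inE => /or4P [] /eqP E //; subst;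
  by move: U4 U5; rewrite /= !inE !eqxx /= ?orbT ?orTb ?andbF.
- move: (@in4 _ _ _ _ a001 U1); rewrite !inE => /or4P [] /eqP E //; subst;
  by move: U3 U5; rewrite /= !inE !eqxx /= ?orbT ?orTb ?andbF.
Qed.

Lemma slab_uniq L M N c o x y z : slab_type_coloring L M N c ->
  all (in_box L M N) (slab_cubes o x y z) -> uniq (map c (slab_cubes o x y z)).
Proof.
move=> H Hin; apply: count_mem_uniq => k.
have h := H o x y z Hin k.
rewrite count_map.
have -> : k \in [seq c i | i <- slab_cubes o x y z].
  by rewrite -has_pred1 has_count count_map h.
exact: h.
Qed.

Definition o0 : 'I_3 := @Ordinal 3 0 isT.
Definition o1 : 'I_3 := @Ordinal 3 1 isT.
Definition o2 : 'I_3 := @Ordinal 3 2 isT.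

Ltac inb := rewrite /= /in_box; repeat (apply/andP; split); try done; lia.

Lemma block L M N c : slab_type_coloring L M N c -> forall x y z,
  x.+1 < L -> y.+1 < M -> z.+1 < N ->
  [/\ c (x,y,z) = c (x.+1,y.+1,z.+1), c (x.+1,y,z) = c (x,y.+1,z.+1),
      c (x,y.+1,z) = c (x.+1,y,z.+1) & c (x,y,z.+1) = c (x.+1,y.+1,z)].
Proof.
move=> H x y z hx hy hz.
apply: cube8.
- by have /= := @slab_uniq _ _ _ _ o0 x y z H; apply; inb.
- by have /= := @slab_uniq _ _ _ _ o0 x y z.+1 H; apply; inb.
- by have /= := @slab_uniq _ _ _ _ o1 x y z H; apply; inb.
- by have /= := @slab_uniq _ _ _ _ o1 x y.+1 z H; apply; inb.
- by have /= := @slab_uniq _ _ _ _ o2 x y z H; apply; inb.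
- by have /= := @slab_uniq _ _ _ _ o2 x.+1 y z H; apply; inb.
Qed.

Lemma diag_up L M N c : slab_type_coloring L M N c -> forall x y z y' z',
  (y' = y.+1 \/ y = y'.+1) -> (z' = z.+1 \/ z = z'.+1) ->
  x.+1 < L -> y < M -> y' < M -> z < N -> z' < N ->
  c (x,y,z) = c (x.+1,y',z').
Proof.
move=> H x y z y' z' [] -> [] -> hx hy hy' hz hz'.
- by case: (block H hx hy' hz').
- by case: (block H hx hy' hz).
- by case: (block H hx hy hz').
- by case: (block H hx hy hz) => _ -> _ _.
Qed.

Lemma diag L M N c : slab_type_coloring L M N c -> forall x y z x' y' z',
  (x' = x.+1 \/ x = x'.+1) -> (y' = y.+1 \/ y = y'.+1) -> (z' = z.+1 \/ z = z'.+1) ->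
  x < L -> x' < L -> y < M -> y' < M -> z < N -> z' < N ->
  c (x,y,z) = c (x',y',z').
Proof.
move=> H x y z x' y' z' [] -> hy hz *.
- by apply: (diag_up H) => //; lia.
- by symmetry; apply: (diag_up H) => //; lia.
Qed.

Lemma red0 L M N c : slab_type_coloring L M N c -> 2 <= L -> 2 <= M -> 2 <= N ->
  forall n x y, x + y <= n -> x < L -> y < M -> c (x,y,0) = c (x %% 2, y %% 2, 0).
Proof.
move=> H hL hM hN; elim=> [|n IH] x y hn hx hy.
  have hx0 : x = 0 by lia.
  have hy0 : y = 0 by lia.
  by subst.
case: (leqP 2 x) => h2x.
  set y' := if y is 0 then 1 else y.-1.
  have hy' : y' < M by rewrite /y'; case: (y) hy => //= *; lia.
  have hy2 : (y' = y.+1 \/ y = y'.+1) by rewrite /y'; case: (y); [left|right].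
  have hy3 : (y = y'.+1 \/ y' = y.+1) by case: hy2; [right|left].
  rewrite (diag H (x' := x.-1) (y' := y') (z' := 1)) //; try lia.
  rewrite (diag H (x' := x.-2) (y' := y) (z' := 0)) //; try lia.
  rewrite IH; try lia.
  by have -> : x.-2 %% 2 = x %% 2 by lia.
case: (leqP 2 y) => h2y.
  set x' := if x is 0 then 1 else x.-1.
  have hx' : x' < L by rewrite /x'; case: (x) hx => //= *; lia.
  have hx2 : (x' = x.+1 \/ x = x'.+1) by rewrite /x'; case: (x); [left|right].
  have hx3 : (x = x'.+1 \/ x' = x.+1) by case: hx2; [right|left].
  rewrite (diag H (x' := x') (y' := y.-1) (z' := 1)) //; try lia.
  rewrite (diag H (x' := x) (y' := y.-2) (z' := 0)) //; try lia.
  rewrite IH; try lia.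
  by have -> : y.-2 %% 2 = y %% 2 by lia.
have -> : x %% 2 = x by lia.
by have -> : y %% 2 = y by lia.
Qed.

Lemma redz L M N c : slab_type_coloring L M N c -> 2 <= L -> 2 <= M -> 2 <= N ->
  forall z x y, x < L -> y < M -> z < N ->
  c (x,y,z) = c ((x + z) %% 2, (y + z) %% 2, 0).
Proof.
move=> H hL hM hN; elim=> [|z IH] x y hx hy hz.
  by rewrite !addn0 (red0 H hL hM hN (n := x + y)).
set y' := if y is 0 then 1 else y.-1.
have hy' : y' < M by rewrite /y'; case: (y) hy => //= *; lia.
have hy2 : (y' = y.+1 \/ y = y'.+1) by rewrite /y'; case: (y); [left|right].
set x' := if x is 0 then 1 else x.-1.
have hx' : x' < L by rewrite /x'; case: (x) hx => //= *; lia.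
have hx2 : (x' = x.+1 \/ x = x'.+1) by rewrite /x'; case: (x); [left|right].
rewrite (diag H (x' := x') (y' := y') (z' := z)) //; try lia.
rewrite IH; try lia.
have -> : (x' + z) %% 2 = (x + z.+1) %% 2 by case: hx2; lia.
by have -> : (y' + z) %% 2 = (y + z.+1) %% 2 by case: hy2; lia.
Qed.

Definition col (a b : bool) : 'I_4 :=
  match a, b with
  | false, false => @Ordinal 4 0 isT | true, false => @Ordinal 4 1 isT
  | false, true => @Ordinal 4 2 isT | true, true => @Ordinal 4 3 isT end.
Definition c0 (p : cube) : 'I_4 :=
  let: (x, y, z) := p in col (odd (x + z)) (odd (y + z)).

Lemma c0_ok L M N : slab_type_coloring L M N c0.
Proof.
move=> o x y z _ k.
case: o => [[|[|[|//]]] Ho] /=; rewrite /slab_cubes /=;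
  rewrite ?addSn ?addnS /=;
  case: (odd (x + z)); case: (odd (y + z));
  case: k => [[|[|[|[|//]]]] Hk]; by [].
Qed.

Definition g (k : 'I_4) : cube :=
  match val k with 0 => (0,0,0) | 1 => (1,0,0) | 2 => (0,1,0) | _ => (1,1,0) end.

Lemma g_inj L M N c : 2 <= L -> 2 <= M -> 2 <= N -> slab_type_coloring L M N c ->
  injective (fun k => c (g k)).
Proof.
move=> hL hM hN H.
have U : uniq [:: c (0,0,0); c (1,0,0); c (0,1,0); c (1,1,0)].
  by have /= := @slab_uniq _ _ _ _ o0 0 0 0 H; apply; inb.
move=> i j; case: i => [[|[|[|[|//]]]] Hi];  case: j => [[|[|[|[|//]]]] Hj] /=;
  try (by move=> _; apply: val_inj);
  move=> E; exfalso; move: U; rewrite /= E !inE !eqxx /= ?orbT ?orTb ?andbF //.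
Qed.
Unset Implicit Arguments. Set Strict Implicit.

Theorem lemma3p2 (L M N : nat) :
  2 <= L -> 2 <= M -> 2 <= N ->
  (exists c : cube -> 'I_4, slab_type_coloring L M N c) /\
  (forall c1 c2 : cube -> 'I_4,
      slab_type_coloring L M N c1 -> slab_type_coloring L M N c2 ->
      exists s : {perm 'I_4}, forall p : cube, in_box L M N p -> c2 p = s (c1 p)).
Proof.
move=> hL hM hN; split.
  by exists c0; apply: c0_ok.
move=> c1 c2 H1 H2.
have i1 := g_inj hL hM hN H1.
have i2 := g_inj hL hM hN H2.
exists ((perm i1)^-1 * perm i2)%g.
have Hs : forall k, ((perm i1)^-1 * perm i2)%g (c1 (g k)) = c2 (g k).
  move=> k; rewrite permM.
  have -> : c1 (g k) = perm i1 k by rewrite permE.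
  by rewrite permK permE.
case=> [[x y] z] /and3P [hx hy hz].
rewrite (redz H1) // (redz H2) //.
have ha : (x + z) %% 2 < 2 by lia.
have hb : (y + z) %% 2 < 2 by lia.
move: ((x + z) %% 2) ((y + z) %% 2) ha hb => a b.
case: a => [|[|//]] _; case: b => [|[|//]] _.
- by rewrite (Hs (@Ordinal 4 0 isT)).
- by rewrite (Hs (@Ordinal 4 2 isT)).
- by rewrite (Hs (@Ordinal 4 1 isT)).
- by rewrite (Hs (@Ordinal 4 3 isT)).
Qed.
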